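(* Let $A$ be a basic connected finite dimensional algebra over an algebraically closed field $k$ with ordinary quiver $Q$ without oriented cycles, and let $D\subseteq\mathsf{HH}^1(A)$. Then $D$ is diagonalizable if and only if there exists a presentation $\nu\colon kQ\twoheadrightarrow A$ such that $D\subseteq\mathsf{Im}(\theta_\nu)$.
   Context: Fix a complete set $e_1,\dots,e_n$ of primitive orthogonal idempotents of $A$ indexed by $Q_0=\{1,\dots,n\}$, $E=\bigoplus ke_i$, $\mathfrak r$ the radical. A presentation is a surjective algebra map $\nu\colon kQ\twoheadrightarrow A$ with admissible kernel ($(kQ^+)^N\subseteq\mathsf{Ker}\,\nu\subseteq(kQ^+)^2$ for some $N\ge2$, $kQ^+$ the arrow ideal) and $\nu(e_i)=e_i$. $\mathsf{HH}^1(A)=Der_0(A)/Int_0(A)$, with $Der_0(A)$ the derivations vanishing on all $e_i$ (commutator bracket) and $Int_0(A)=\{a\mapsto ea-ae\mid e\in E\}$. A basis of $A$ is a $k$-basis $\mathcal B\subseteq\bigcup_{i,j}e_jAe_i$ containing $e_1,\dots,e_n$ with its other elements in $\mathfrak r$; a subset $D\subseteq\mathsf{HH}^1(A)$ is diagonalizable if there is a basis $\mathcal B$ such that every $f\in D$ is represented by a derivation diagonal in $\mathcal B$. Walks: paths in $Q$ with formal inverse arrows allowed. For $I=\mathsf{Ker}\,\nu$, $\sim_I$ is the smallest equivalence relation on walks with $\alpha\alpha^{-1}\sim_I e_y$, $\alpha^{-1}\alpha\sim_I e_x$ for arrows $\alpha\colon x\to y$, compatible with concatenation, and identifying two paths occurring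 with nonzero coefficient in a same minimal relation of $I$ (a nonzero $\sum t_iu_i\in I$, $t_i\neq0$, distinct paths, no nonempty proper subsum in $I$). $\pi_1(Q,I)$ is the group of classes of closed walks at a fixed vertex $x_0$. Fix a maximal tree $T$ of $Q$, $\gamma_x$ the minimal walk in $T$ from $x_0$ to $x$. For a group homomorphism $f\colon\pi_1(Q,I)\to k^+$, $\theta_\nu(f)$ is the class of the derivation $\tilde f$ with $\tilde f(\nu(u))=f([\gamma_y^{-1}u\gamma_x]_I)\nu(u)$ for paths $u$ from $x$ to $y$. *)

(* Defs.v *)
From HB Require Import structures.
From mathcomp Require Import all_boot all_order all_algebra falgebra.
Set Implicit Arguments. Unset Strict Implicit. Unset Printing Implicit Defensive.
Import GRing.Theory.
Local Open Scope ring_scope.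

(* A letter (a, true) traverses a from src a to tgt a; (a, false)      *)
(* traverses the formal inverse a^-1 from tgt a to src a.              *)
(* A walk is (start vertex, letters in traversal order).               *)
(* A path is (start vertex, arrows in traversal order).                *)
Section Quiver.
Variables (n : nat) (Arr : finType) (src tgt : Arr -> 'I_n).

Definition walk := ('I_n * seq (Arr * bool))%type.
Definition qpath := ('I_n * seq Arr)%type.

Definition letter_src (l : Arr * bool) : 'I_n := if l.2 then src l.1 else tgt l.1.
Definition letter_tgt (l : Arr * bool) : 'I_n := if l.2 then tgt l.1 else src l.1.

Fixpoint letters_ok (x : 'I_n) (s : seq (Arr * bool)) : bool :=
  if s is l :: s' then (letter_src l == x) && letters_ok (letter_tgt l) s' else true.

Definition walk_ok (w : walk) : bool := letters_ok w.1 w.2.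
Definition wend (w : walk) : 'I_n := last w.1 (map letter_tgt w.2).

(* concatenation: first w1, then w2 (in the paper's functional notation
   this is the walk  w2 w1 ) *)
Definition wcat (w1 w2 : walk) : walk := (w1.1, w1.2 ++ w2.2).
Definition winv (w : walk) : walk :=
  (wend w, rev (map (fun l => (l.1, ~~ l.2)) w.2)).
Definition wtriv (x : 'I_n) : walk := (x, [::]).

Definition path_walk (p : qpath) : walk := (p.1, map (fun a => (a, true)) p.2).
Definition path_ok (p : qpath) : bool := walk_ok (path_walk p).
Definition path_end (p : qpath) : 'I_n := wend (path_walk p).

Definition acyclic_quiver : Prop :=
  forall p : qpath, path_ok p -> p.2 != [::] -> path_end p != p.1.

Definition in_arrows (T : {set Arr}) (w : walk) : bool := all (fun l => l.1 \in T) w.2.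

Fixpoint reduced_letters (s : seq (Arr * bool)) : bool :=
  match s with
  | l1 :: ((l2 :: _) as s') =>
      ~~ ((l1.1 == l2.1) && (l1.2 != l2.2)) && reduced_letters s'
  | _ => true
  end.

Definition is_tree (T : {set Arr}) : Prop :=
  forall w : walk, walk_ok w -> in_arrows T w -> w.2 != [::] ->
    reduced_letters w.2 -> wend w = w.1 -> False.

Definition is_max_tree (T : {set Arr}) : Prop :=
  is_tree T /\ forall a, a \notin T -> ~ is_tree (a |: T).

Definition gamma_spec (T : {set Arr}) (x0 : 'I_n) (gamma : 'I_n -> walk) : Prop :=
  forall x, [/\ walk_ok (gamma x), (gamma x).1 = x0, wend (gamma x) = x,
     in_arrows T (gamma x) &
     forall w : walk, walk_ok w -> w.1 = x0 -> wend w = x -> in_arrows T w ->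
       (size (gamma x).2 <= size w.2)%N].

End Quiver.

Section Algebra.
Variables (k : fieldType) (A : falgType k).

(* Jacobson radical: a \in r  iff  1 - x a is left invertible for all x *)
Definition in_rad (a : A) : Prop := forall x : A, exists y : A, y * (1 - x * a) = 1.

Definition in_rad2 (a : A) : Prop :=
  exists s : seq (A * A), (forall p, p \in s -> in_rad p.1 /\ in_rad p.2) /\
    a = \sum_(p <- s) p.1 * p.2.

Definition primitive_idem (x : A) : Prop :=
  x != 0 /\ forall f g : A, f * f = f -> g * g = g -> f * g = 0 -> g * f = 0 ->
    f + g = x -> f = 0 \/ g = 0.

Variables (n : nat) (e : 'I_n -> A).

Definition complete_prim_orth : Prop :=
  [/\ forall i, e i * e i = e i,
      forall i j, i != j -> e i * e j = 0,
      \sum_i e i = 1 &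
      forall i, primitive_idem (e i)].

(* basic: e_i A and e_j A are non-isomorphic for i <> j
   (an isomorphism e_i A -> e_j A is left multiplication by some
    x in e_j A e_i with inverse given by some y in e_i A e_j) *)
Definition basic_alg : Prop :=
  forall i j, i != j -> ~ exists x y : A,
    [/\ x = e j * x * e i, y = e i * y * e j, y * x = e i & x * y = e j].

Definition connected_alg : Prop :=
  forall c : A, c * c = c -> (forall a : A, c * a = a * c) -> c = 0 \/ c = 1.

Variables (Arr : finType) (src tgt : Arr -> 'I_n).

(* Q is the ordinary quiver of A (w.r.t. e): the number of arrows i -> j
   equals dim e_j (r/r^2) e_i; X is a family of elements of e_j r e_i whose
   classes form a basis of e_j (r/r^2) e_i. *)
Definition is_ordinary_quiver : Prop :=
  forall i j : 'I_n, exists X : seq A,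
    [/\ size X = #|[set a | (src a == i) && (tgt a == j)]|,
        forall x, x \in X -> in_rad x /\ x = e j * x * e i,
        forall a, in_rad a -> a = e j * a * e i ->
          exists c : nat -> k, in_rad2 (a - \sum_(t < size X) c t *: X`_t) &
        forall c : nat -> k, in_rad2 (\sum_(t < size X) c t *: X`_t) ->
          forall t, (t < size X)%N -> c t = 0].

(* An algebra map nu : kQ -> A with nu(e_i) = e_i is given by the images
   nu a in e_{tgt a} A e_{src a} of the arrows; nu of a path from x
   a_1 ... a_m (traversal order) is  nu a_m * ... * nu a_1 * e_x. *)
Definition nu_path (nu : Arr -> A) (p : qpath n Arr) : A :=
  foldl (fun acc a => nu a * acc) (e p.1) p.2.

(* image of the element  \sum_(p <- s) c p * p  of kQ *)
Definition nu_sum (nu : Arr -> A) (s : seq (qpath n Arr)) (c : qpath n Arr -> k) : A :=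
  \sum_(p <- s) c p *: nu_path nu p.

Definition is_presentation (nu : Arr -> A) : Prop :=
  [/\ forall a, nu a = e (tgt a) * nu a * e (src a),
      forall a : A, exists s c, all (path_ok src tgt) s /\ a = nu_sum nu s c,
      exists N, (2 <= N)%N /\ forall p, path_ok src tgt p -> (N <= size p.2)%N ->
                                   nu_path nu p = 0 &
      (* Ker nu \subseteq (kQ^+)^2 *)
      forall s c, uniq s -> all (path_ok src tgt) s -> nu_sum nu s c = 0 ->
        forall p, p \in s -> (size p.2 <= 1)%N -> c p = 0].

Definition minimal_relation (nu : Arr -> A) (s : seq (qpath n Arr)) (t : qpath n Arr -> k) : Prop :=
  [/\ uniq s && all (path_ok src tgt) s, s != [::],
      forall p, p \in s -> t p != 0,
      nu_sum nu s t = 0 &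
      forall m : bitseq, mask m s != [::] -> (size (mask m s) < size s)%N ->
        nu_sum nu (mask m s) t != 0].

Inductive walk_rel (nu : Arr -> A) : walk n Arr -> walk n Arr -> Prop :=
  | wr_refl w : walk_rel nu w w
  | wr_sym w w' : walk_rel nu w w' -> walk_rel nu w' w
  | wr_trans w1 w2 w3 : walk_rel nu w1 w2 -> walk_rel nu w2 w3 -> walk_rel nu w1 w3
  | wr_cancel (a : Arr) (b : bool) :
      walk_rel nu (letter_src src tgt (a, b), [:: (a, b); (a, ~~ b)])
                  (wtriv Arr (letter_src src tgt (a, b)))
  | wr_ctx (x : 'I_n) pre (w w' : walk n Arr) post :
      walk_rel nu w w' ->
      walk_ok src tgt (x, pre ++ w.2 ++ post) -> walk_ok src tgt (x, pre ++ w'.2 ++ post) ->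
      wend src tgt (x, pre) = w.1 -> wend src tgt (x, pre) = w'.1 ->
      walk_rel nu (x, pre ++ w.2 ++ post) (x, pre ++ w'.2 ++ post)
  | wr_minrel s t u v :
      minimal_relation nu s t -> u \in s -> v \in s ->
      walk_rel nu (path_walk u) (path_walk v).

Definition closed_at (x0 : 'I_n) (w : walk n Arr) : bool :=
  [&& walk_ok src tgt w, w.1 == x0 & wend src tgt w == x0].

(* group homomorphisms pi_1(Q, Ker nu) -> k^+ (pi_1 taken at x0), given
   as functions on closed walks at x0, constant on ~_I-classes and
   sending concatenation to addition. *)
Definition pi1_hom (nu : Arr -> A) (x0 : 'I_n) (f : walk n Arr -> k) : Prop :=
  (forall w w', closed_at x0 w -> closed_at x0 w' -> walk_rel nu w w' -> f w = f w') /\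
  (forall w1 w2, closed_at x0 w1 -> closed_at x0 w2 -> f (wcat w1 w2) = f w1 + f w2).

Definition der0 (d : A -> A) : Prop :=
  [/\ forall (c : k) (a b : A), d (c *: a + b) = c *: d a + d b,
      forall a b : A, d (a * b) = d a * b + a * d b &
      forall i, d (e i) = 0].

Definition int0 (d : A -> A) : Prop :=
  exists c : 'I_n -> k, let E := \sum_i c i *: e i in forall a, d a = E * a - a * E.

Definition hh1_eq (d d' : A -> A) : Prop := int0 (fun a => d a - d' a).

Definition adapted_basis (B : seq A) : Prop :=
  [/\ basis_of fullv B,
      forall b, b \in B -> exists i j, b = e j * b * e i,
      forall i, e i \in B &
      forall b, b \in B -> (forall i, b != e i) -> in_rad b].

Definition diagonal_in (B : seq A) (d : A -> A) : Prop :=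
  forall b, b \in B -> exists c : k, d b = c *: b.

(* D \subseteq HH^1(A) is given by a set of representatives in Der_0(A) *)
Definition diagonalizable_HH1 (D : (A -> A) -> Prop) : Prop :=
  exists B, adapted_basis B /\
    forall d, D d -> exists d', [/\ der0 d', diagonal_in B d' & hh1_eq d d'].

Definition in_im_theta (nu : Arr -> A) (x0 : 'I_n) (gamma : 'I_n -> walk n Arr)
    (d : A -> A) : Prop :=
  exists f : walk n Arr -> k, pi1_hom nu x0 f /\
  exists d' : A -> A, [/\ der0 d',
    forall u : qpath n Arr, path_ok src tgt u ->
      d' (nu_path nu u) =
      f (wcat (wcat (gamma u.1) (path_walk u)) (winv src tgt (gamma (path_end src tgt u))))
        *: nu_path nu u &
    hh1_eq d d'].

End Algebra.

(* Main.v *)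
Require Import Defs.
From HB Require Import structures.
From mathcomp Require Import all_boot all_order all_algebra falgebra.
From Stdlib Require Import IndefiniteDescription Classical.
Set Implicit Arguments. Unset Strict Implicit. Unset Printing Implicit Defensive.
Import GRing.Theory.
Local Open Scope ring_scope.

Section Rad.
Variables (k : fieldType) (A : falgType k).

Lemma swap_inv (u v w : A) : w * (1 - u * v) = 1 -> (1 + v * w * u) * (1 - v * u) = 1.
Proof.
move=> H.
have E : w * (u * v) = w - 1.
  by move: H; rewrite mulrBr mulr1 => <-; rewrite opprB addrC subrK.
have E2 : v * w * u * (v * u) = v * w * u - v * u.
  have -> : v * w * u * (v * u) = v * (w * (u * v)) * u by rewrite !mulrA.
  by rewrite E mulrBr mulr1 mulrBl.
rewrite mulrDl mul1r mulrBr mulr1 E2.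
by rewrite opprB [v * w * u + _]addrCA subrr addr0 subrK.
Qed.

Lemma rad0 : in_rad (0 : A).
Proof. by move=> x; exists 1; rewrite mulr0 subr0 mulr1. Qed.

Lemma radD (a b : A) : in_rad a -> in_rad b -> in_rad (a + b).
Proof.
move=> Ha Hb x; have [u Hu] := Ha x; have [v Hv] := Hb (u * x).
exists (v * u).
have -> : 1 - x * (a + b) = (1 - x * a) - x * b by rewrite mulrDr opprD addrA.
rewrite -mulrA mulrBr Hu mulrA; exact: Hv.
Qed.

Lemma radMl (x a : A) : in_rad a -> in_rad (x * a).
Proof. by move=> Ha y; have [u Hu] := Ha (y * x); exists u; rewrite mulrA. Qed.

Lemma radMr (a x : A) : in_rad a -> in_rad (a * x).
Proof.
move=> Ha y; have [w Hw] := Ha (x * y).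
have Hw' : w * (1 - x * (y * a)) = 1 by rewrite mulrA.
have H := swap_inv Hw'.
by exists (1 + y * a * w * x); rewrite mulrA.
Qed.

Lemma radZ (c : k) (a : A) : in_rad a -> in_rad (c *: a).
Proof. move=> Ha; have -> : c *: a = (c *: 1) * a by rewrite -scalerAl mul1r.
exact: radMl. Qed.

Lemma radN (a : A) : in_rad a -> in_rad (- a).
Proof. by move=> Ha; rewrite -scaleN1r; apply: radZ. Qed.

Lemma radB (a b : A) : in_rad a -> in_rad b -> in_rad (a - b).
Proof. by move=> Ha Hb; apply: radD => //; apply: radN. Qed.

Lemma rad_sum (I : Type) (r : seq I) (P : pred I) (F : I -> A) :
  (forall i, P i -> in_rad (F i)) -> in_rad (\sum_(i <- r | P i) F i).
Proof. by move=> H; apply: big_ind => //; [exact: rad0 | exact: radD]. Qed.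

Lemma rad_idem (a : A) : a * a = a -> in_rad a -> a = 0.
Proof.
move=> Ha Hr; have [y Hy] := Hr 1.
have : y * (1 - 1 * a) * a = a by rewrite Hy mul1r.
by rewrite mul1r -mulrA mulrBl mul1r Ha subrr mulr0.
Qed.

Lemma rad2_0 : in_rad2 (0 : A).
Proof. by exists [::]; split => //; rewrite big_nil. Qed.

Lemma rad2D (a b : A) : in_rad2 a -> in_rad2 b -> in_rad2 (a + b).
Proof.
move=> [s [Hs ->]] [t [Ht ->]]; exists (s ++ t); split; last by rewrite big_cat.
by move=> p; rewrite mem_cat => /orP[/Hs|/Ht].
Qed.

Lemma rad2Z (c : k) (a : A) : in_rad2 a -> in_rad2 (c *: a).
Proof.
move=> [s [Hs ->]]; exists [seq (c *: p.1, p.2) | p <- s]; split.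
  move=> p /mapP[q /Hs [H1 H2] ->] /=; split => //; exact: radZ.
by rewrite big_map scaler_sumr; apply: eq_bigr => p _; rewrite scalerAl.
Qed.

Lemma rad2M (a b : A) : in_rad a -> in_rad b -> in_rad2 (a * b).
Proof.
move=> Ha Hb; exists [:: (a, b)]; split; last by rewrite big_seq1.
by move=> p; rewrite inE => /eqP ->.
Qed.

Lemma rad2_rad (a : A) : in_rad2 a -> in_rad a.
Proof.
move=> [s [Hs ->]]; rewrite big_seq; apply: rad_sum => p /Hs [H1 H2].
exact: radMr.
Qed.

Lemma rad2_sandwich (x y a : A) : in_rad2 a -> in_rad2 (x * a * y).
Proof.
move=> [s [Hs ->]]; exists [seq (x * p.1, p.2 * y) | p <- s]; split.
  move=> p /mapP[q /Hs [H1 H2] ->] /=; split; [exact: radMl | exact: radMr].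
rewrite big_map mulr_sumr mulr_suml; apply: eq_bigr => p _; by rewrite !mulrA.
Qed.

Lemma geom_inv (z : A) (N : nat) : (\sum_(i < N) z ^+ i) * (1 - z) = 1 - z ^+ N.
Proof.
elim: N => [|N IH]; first by rewrite big_ord0 mul0r expr0 subrr.
rewrite big_ord_recr /= mulrDl IH mulrBr mulr1 -exprSr.
by rewrite addrA subrK.
Qed.

Lemma nilp_unit (z : A) (N : nat) : z ^+ N = 0 -> exists y, y * (1 - z) = 1.
Proof. by move=> H; exists (\sum_(i < N) z ^+ i); rewrite geom_inv H subr0. Qed.

Lemma span_ind (P : A -> Prop) (X : seq A) :
  P 0 -> (forall (c : k) u v, P u -> P v -> P (c *: u + v)) ->
  (forall x, x \in X -> P x) -> forall v, v \in <<X>>%VS -> P v.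
Proof.
move=> P0 Pc PX v Hv; rewrite (@coord_span _ _ _ (in_tuple X) v Hv).
apply: (big_rec (fun x => P x)) => // i x _ Hx.
by apply: Pc => //; apply: PX; apply: mem_nth; exact: ltn_ord.
Qed.

Lemma nakayama (K : nat) (m : 'I_K -> A) (a : 'I_K -> 'I_K -> A) :
  (forall i j, in_rad (a i j)) -> (forall i, m i = \sum_j a i j * m j) ->
  forall i, m i = 0.
Proof.
elim: K m a => [|K IH] m a Ha Hm; first by case.
pose l := @ord_max K.
have [u Hu] := Ha l l 1; rewrite mul1r in Hu.
have Hml : m l = u * \sum_(j < K) a l (widen_ord (leqnSn K) j) * m (widen_ord (leqnSn K) j).
  have := Hm l; rewrite big_ord_recr /= => H.
  have : (1 - a l l) * m l = \sum_(j < K) a l (widen_ord (leqnSn K) j) * m (widen_ord (leqnSn K) j).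
    by rewrite mulrBl mul1r {1}H addrK.
  by move=> <-; rewrite mulrA Hu mul1r.
pose m' := fun j : 'I_K => m (widen_ord (leqnSn K) j).
pose a' := fun i j : 'I_K => a (widen_ord (leqnSn K) i) (widen_ord (leqnSn K) j)
   + a (widen_ord (leqnSn K) i) l * u * a l (widen_ord (leqnSn K) j).
have H' : forall i, m' i = 0.
  apply: (IH m' a').
    move=> i j; apply: radD => //; apply: radMr; apply: radMr; exact: Ha.
  move=> i; rewrite /m' {1}Hm big_ord_recr /= Hml.
  rewrite mulr_sumr mulr_sumr -big_split /=; apply: eq_bigr => j _.
  by rewrite /a' mulrDl !mulrA.
move=> i; case: (unliftP l i) => [j ->|->].
  have := H' j; rewrite /m'; congr (m _ = _); apply: val_inj => /=.
  by rewrite /bump leqNgt ltn_ord.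
have H2 : forall j, m (widen_ord (leqnSn K) j) = 0 := H'.
rewrite Hml; under eq_bigr => j _ do rewrite H2 mulr0.
by rewrite big1 ?mulr0.
Qed.

End Rad.

Section Idem.
Variables (k : fieldType) (A : falgType k) (n : nat) (e : 'I_n -> A).
Hypothesis He : complete_prim_orth e.

Lemma eMe i j : e i * e j = if i == j then e i else 0.
Proof.
case: He => H1 H2 _ _; case: eqP => [->|/eqP]; [exact: H1 | exact: H2].
Qed.

Lemma e_neq0 i : e i != 0.
Proof. by case: He => _ _ _ /(_ i) []. Qed.

Lemma e_notrad i : ~ in_rad (e i).
Proof.
move=> H; have := rad_idem _ H; rewrite eMe eqxx => /(_ erefl) /eqP.
by rewrite (negbTE (e_neq0 i)).
Qed.

Lemma sum_e : \sum_i e i = 1.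
Proof. by case: He. Qed.

Lemma e_inj : injective e.
Proof.
move=> i j Hij; apply/eqP; apply/negP => /negP Hn.
have := eMe i j; rewrite (negbTE Hn) Hij eMe eqxx => H.
by move: (e_neq0 j); rewrite H eqxx.
Qed.

Lemma decomp (a : A) : a = \sum_i \sum_j e j * a * e i.
Proof.
rewrite {1}(_ : a = (\sum_j e j) * a * (\sum_i e i)); last by rewrite sum_e mulr1 mul1r.
rewrite mulr_sumr; apply: eq_bigr => i _; by rewrite !mulr_suml.
Qed.

Definition Ec (c : 'I_n -> k) := \sum_i c i *: e i.

Lemma e_Ec j c : e j * Ec c = c j *: e j.
Proof.
rewrite /Ec mulr_sumr (bigD1 j) //= -scalerAr eMe eqxx big1 ?addr0 //.
by move=> i /negbTE Hi; rewrite -scalerAr eMe eq_sym Hi scaler0.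
Qed.

Lemma Ec_e j c : Ec c * e j = c j *: e j.
Proof.
rewrite /Ec mulr_suml (bigD1 j) //= -scalerAl eMe eqxx big1 ?addr0 //.
by move=> i /negbTE Hi; rewrite -scalerAl eMe Hi scaler0.
Qed.

Lemma EcB c c' : Ec c - Ec c' = Ec (fun i => c i - c' i).
Proof. by rewrite /Ec -sumrB; apply: eq_bigr => i _; rewrite scalerBl. Qed.

Lemma free_e : free [seq e i | i <- enum 'I_n].
Proof.
have : uniq [seq e i | i <- enum 'I_n] by rewrite map_inj_uniq ?enum_uniq //; exact: e_inj.
have : forall x y, x \in [seq e i | i <- enum 'I_n] -> y \in [seq e i | i <- enum 'I_n] ->
   x * y = if x == y then x else 0.
  move=> x y /mapP[i _ ->] /mapP[j _ ->]; rewrite eMe.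
  by rewrite (inj_eq e_inj).
have : forall x, x \in [seq e i | i <- enum 'I_n] -> x != 0.
  by move=> x /mapP[i _ ->]; exact: e_neq0.
elim: [seq e i | i <- enum 'I_n] => [|x X IH] Hnz Hmul Hu; first exact: nil_free.
move: Hu => /= /andP[HxX HuX].
rewrite free_cons IH //; last first.
- by move=> u v Hu Hv; apply: Hmul; rewrite inE ?Hu ?Hv orbT.
- by move=> u Hu; apply: Hnz; rewrite inE Hu orbT.
rewrite andbT; apply/negP => Hx.
have H0 : forall v, v \in <<X>>%VS -> x * v = 0.
  apply: span_ind; first by rewrite mulr0.
    by move=> c u v Hu Hv; rewrite mulrDr -scalerAr Hu Hv scaler0 addr0.
  move=> y Hy; rewrite Hmul ?inE ?eqxx ?Hy ?orbT //.
  by case: eqP => // Exy; move: HxX; rewrite Exy Hy.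
have := H0 x Hx; rewrite Hmul ?inE ?eqxx // => Hx0.
by move: (Hnz x); rewrite inE eqxx Hx0 eqxx => /(_ erefl).
Qed.

End Idem.

Section Paths.
Variables (k : fieldType) (A : falgType k) (n : nat) (e : 'I_n -> A).
Hypothesis He : complete_prim_orth e.
Variables (Arr : finType) (src tgt : Arr -> 'I_n) (nu : Arr -> A).
Hypothesis Hnu : forall a, nu a = e (tgt a) * nu a * e (src a).

Local Notation NP := (nu_path e nu).
Local Notation pok := (path_ok src tgt).
Local Notation pend := (path_end src tgt).

Lemma letters_ok_cat x s1 s2 :
  letters_ok src tgt x (s1 ++ s2) =
  letters_ok src tgt x s1 && letters_ok src tgt (last x (map (letter_tgt src tgt) s1)) s2.
Proof. by elim: s1 x => [|l s IH] x //=; rewrite IH andbA. Qed.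

Lemma pok_rcons x s a : pok (x, rcons s a) = pok (x, s) && (src a == pend (x, s)).
Proof.
rewrite /path_ok /walk_ok /path_walk /= map_rcons -cats1 letters_ok_cat /=.
by rewrite andbT /path_end /wend /=.
Qed.

Lemma pend_rcons x s a : pend (x, rcons s a) = tgt a.
Proof. by rewrite /path_end /wend /= !map_rcons last_rcons. Qed.

Lemma pend_nil x : pend (x, [::]) = x.
Proof. by []. Qed.

Lemma pok_nil x : pok (x, [::]).
Proof. by []. Qed.

Lemma NP_rcons x s a : NP (x, rcons s a) = nu a * NP (x, s).
Proof. by rewrite /nu_path /= foldl_rcons. Qed.

Lemma NP_nil x : NP (x, [::]) = e x.
Proof. by []. Qed.

Lemma foldl_nuM (X Y : A) s :
  foldl (fun acc a => nu a * acc) (X * Y) s = foldl (fun acc a => nu a * acc) X s * Y.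
Proof. by elim: s X => [|a s IH] X //=; rewrite mulrA IH. Qed.

Lemma foldl_nu0 s : foldl (fun acc a => nu a * acc) 0 s = 0.
Proof. by elim: s => [|a s IH] //=; rewrite mulr0. Qed.

Lemma NP_e p x : NP p * e x = if p.1 == x then NP p else 0.
Proof.
case: p => y s; rewrite /nu_path /= -foldl_nuM (eMe He).
by case: eqP => // _; rewrite foldl_nu0.
Qed.

Lemma e_NP p y : pok p -> e y * NP p = if pend p == y then NP p else 0.
Proof.
case: p => x s; elim/last_ind: s => [|s a IH] /=.
  by move=> _; rewrite NP_nil (eMe He) pend_nil eq_sym; case: eqP => // ->.
rewrite pok_rcons => /andP[Hok /eqP Hs].
rewrite NP_rcons pend_rcons Hnu -!mulrA mulrA (eMe He) eq_sym.
by case: eqP => [<- //|_]; rewrite mul0r.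
Qed.

Lemma NP_block p : pok p -> NP p = e (pend p) * NP p * e p.1.
Proof. by move=> H; rewrite e_NP // eqxx NP_e eqxx. Qed.

Lemma NP_mul p q : pok p ->
  NP q * NP p = if q.1 == pend p then NP (p.1, p.2 ++ q.2) else 0.
Proof.
move=> Hp; case: q => y t /=; rewrite {1}/nu_path /= -foldl_nuM e_NP // eq_sym.
case: eqP => _; last exact: foldl_nu0.
by case: p Hp => x s _; rewrite /nu_path /= foldl_cat.
Qed.

Lemma pok_cat p q : pok p -> pok q -> q.1 = pend p -> pok (p.1, p.2 ++ q.2).
Proof.
case: p q => x s [y t] Hp Hq /= Hy.
rewrite /path_ok /walk_ok /path_walk /= map_cat letters_ok_cat.
move: Hp Hq; rewrite /path_ok /walk_ok /path_walk /= => -> /=; rewrite Hy; exact.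
Qed.

Lemma pend_cat p q : pok q -> q.1 = pend p -> pend (p.1, p.2 ++ q.2) = pend q.
Proof.
case: p q => x s [y t] /= Hq Hy.
rewrite /path_end /wend /path_walk /= map_cat map_cat last_cat.
by rewrite Hy. Qed.

End Paths.

Section Spred.
Variables (k : fieldType) (A : falgType k) (n : nat) (e : 'I_n -> A).
Hypothesis He : complete_prim_orth e.
Variables (Arr : finType) (src tgt : Arr -> 'I_n) (nu : Arr -> A).
Hypothesis Hnu : forall a, nu a = e (tgt a) * nu a * e (src a).

Local Notation NP := (nu_path e nu).
Local Notation pok := (path_ok src tgt).
Local Notation pend := (path_end src tgt).

Definition Spred (m : nat) (v : A) : Prop :=
  exists l : seq (k * qpath n Arr), (forall q, q \in l -> pok q.2 /\ (m <= size q.2.2)%N) /\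
    v = \sum_(q <- l) q.1 *: NP q.2.

Lemma Spred0 m : Spred m 0.
Proof. by exists [::]; split => //; rewrite big_nil. Qed.

Lemma SpredC m (c : k) u v : Spred m u -> Spred m v -> Spred m (c *: u + v).
Proof.
move=> [l [Hl ->]] [l' [Hl' ->]].
exists ([seq (c * q.1, q.2) | q <- l] ++ l'); split.
  move=> q; rewrite mem_cat => /orP[/mapP[q' /Hl Hq ->] //|/Hl' //].
rewrite big_cat big_map scaler_sumr; congr (_ + _); apply: eq_bigr => q _.
by rewrite scalerA.
Qed.

Lemma SpredD m u v : Spred m u -> Spred m v -> Spred m (u + v).
Proof. by move=> Hu Hv; rewrite -(scale1r u); apply: SpredC. Qed.

Lemma SpredZ m (c : k) u : Spred m u -> Spred m (c *: u).
Proof. by move=> Hu; rewrite -(addr0 (c *: u)); apply: SpredC => //; apply: Spred0. Qed.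

Lemma Spred_sum m (I : Type) (r : seq I) (P : pred I) (F : I -> A) :
  (forall i, P i -> Spred m (F i)) -> Spred m (\sum_(i <- r | P i) F i).
Proof. by move=> H; apply: big_ind => //; [exact: Spred0 | exact: SpredD]. Qed.

Lemma Spred_NP m p : pok p -> (m <= size p.2)%N -> Spred m (NP p).
Proof.
move=> Hp Hm; exists [:: (1, p)]; split; last by rewrite big_seq1 scale1r.
by move=> q; rewrite inE => /eqP ->.
Qed.

Lemma Spred_mono m m' v : (m' <= m)%N -> Spred m v -> Spred m' v.
Proof.
move=> Hm [l [Hl ->]]; exists l; split => // q /Hl [H1 H2]; split => //.
exact: leq_trans H2.
Qed.

Lemma Spred_NPmul m l p q : pok p -> pok q -> (m <= size q.2)%N -> (l <= size p.2)%N ->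
  Spred (m + l) (NP q * NP p).
Proof.
move=> Hp Hq Hm Hl; rewrite (NP_mul He Hnu) //; case: eqP => [Hqp|_]; last exact: Spred0.
apply: Spred_NP; first exact: pok_cat.
by rewrite size_cat addnC leq_add.
Qed.

Lemma Spred_mul m l x y : Spred m x -> Spred l y -> Spred (m + l) (x * y).
Proof.
move=> [lx [Hx ->]] [ly [Hy ->]].
rewrite mulr_suml big_seq; apply: Spred_sum => q /Hx [Hq1 Hq2].
rewrite mulr_sumr big_seq; apply: Spred_sum => p /Hy [Hp1 Hp2].
rewrite -scalerAl -scalerAr; apply: SpredZ; apply: SpredZ.
exact: Spred_NPmul.
Qed.

Lemma Spred_nilp N v : (forall p, pok p -> (N <= size p.2)%N -> NP p = 0) ->
  Spred N v -> v = 0.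
Proof.
move=> H [l [Hl Hv]]; rewrite Hv big_seq big1 // => q /Hl [H1 H2].
by rewrite H // scaler0.
Qed.

Lemma nu_sum_Spred s c : all pok s -> Spred 0 (nu_sum e nu s c).
Proof.
move=> /allP Hs; rewrite /nu_sum big_seq; apply: Spred_sum => p Hp.
by apply: SpredZ; apply: Spred_NP => //; apply: Hs.
Qed.

Lemma Spred_nu_sum v : Spred 0 v -> exists s c, [/\ uniq s, all pok s & v = nu_sum e nu s c].
Proof.
move=> [l [Hl ->]]; elim: l Hl => [|q l IH] Hl.
  by exists [::], (fun _ => 0); rewrite big_nil /nu_sum big_nil.
rewrite big_cons; have [|s [c [Hu Ha ->]]] := IH; first by move=> q' Hq'; apply: Hl; rewrite inE Hq' orbT.
have [Hq _] := Hl q (mem_head _ _).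
case Hin: (q.2 \in s).
  exists s, (fun p => if p == q.2 then c p + q.1 else c p); split => //.
  rewrite /nu_sum (bigD1_seq q.2) //= [in RHS](bigD1_seq q.2) //= eqxx scalerDl.
  rewrite addrCA addrA; congr (_ + _); apply: eq_bigr => p /negbTE ->.
  by [].
exists (q.2 :: s), (fun p => if p == q.2 then q.1 else c p); split.
- by rewrite /= Hin.
- by rewrite /= Hq.
rewrite /nu_sum big_cons eqxx; congr (_ + _); rewrite big_seq_cond [in RHS]big_seq_cond.
apply: eq_bigr => p /andP[Hp _]; case: eqP => // Epq.
by move: Hin; rewrite -Epq Hp.
Qed.

Lemma der0_lin d : der0 e d -> forall (c : k) a b, d (c *: a + b) = c *: d a + d b.
Proof. by case. Qed.

Lemma der0_0 d : der0 e d -> d 0 = 0.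
Proof.
move=> [H _ _]; have := H 1 0 0; rewrite !scale1r addr0.
by move/(congr1 (fun x => x - d 0)); rewrite subrr addrK => /esym.
Qed.

Lemma der0_D d : der0 e d -> forall a b, d (a + b) = d a + d b.
Proof. by move=> Hd a b; have := der0_lin Hd 1 a b; rewrite !scale1r. Qed.

Lemma der0_Z d : der0 e d -> forall (c : k) a, d (c *: a) = c *: d a.
Proof. by move=> Hd c a; have := der0_lin Hd c a 0; rewrite !addr0 der0_0 // addr0. Qed.

Lemma der0_sum d : der0 e d -> forall (I : Type) (r : seq I) (P : pred I) (F : I -> A),
  d (\sum_(i <- r | P i) F i) = \sum_(i <- r | P i) d (F i).
Proof.
move=> Hd I r P F; elim/big_rec2: _ => [|i x y _ <-]; first exact: der0_0.
exact: der0_D.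
Qed.

Lemma der0_M d : der0 e d -> forall a b, d (a * b) = d a * b + a * d b.
Proof. by case. Qed.

Lemma der0_NP d (lam : Arr -> k) : der0 e d -> (forall a, d (nu a) = lam a *: nu a) ->
  forall p, d (NP p) = (\sum_(a <- p.2) lam a) *: NP p.
Proof.
move=> Hd Hl [x s]; elim/last_ind: s => [|s a IH] /=.
  by rewrite NP_nil big_nil scale0r; case: Hd.
rewrite NP_rcons der0_M // Hl IH big_rcons /= -scalerAl -scalerAr scalerDl addrC.
by [].
Qed.

End Spred.

Section Extend.
Variables (k : fieldType) (A : falgType k).

Lemma extend_basis (Good : A -> Prop) :
  (forall v, exists l : seq (k * A), (forall q, q \in l -> Good q.2) /\ v = \sum_(q <- l) q.1 *: q.2) ->
  forall B0, free B0 -> (forall b, b \in B0 -> Good b) ->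
  exists B, [/\ free B, <<B>>%VS = fullv, forall b, b \in B -> Good b & {subset B0 <= B}].
Proof.
move=> Hsp B0; move: {2}(\dim {:A} - size B0)%N (leqnn (\dim {:A} - size B0)%N) => m.
elim: m B0 => [|m IH] B0 Hm Hf HG.
  exists B0; split => //; apply/eqP; rewrite eqEdim subvf /=.
  by move: (Hf) => /eqP ->; rewrite -subn_eq0 -leqn0.
case Hfull: (<<B0>>%VS == fullv); first by exists B0; split => //; apply/eqP.
have [g [Hg Hgn]] : exists g, Good g /\ g \notin <<B0>>%VS.
  apply: NNPP => Hn; move/negP: Hfull; apply; apply/eqP/vspaceP => v.
  rewrite memvf; have [l [Hl ->]] := Hsp v.
  rewrite big_seq; apply: memv_suml => q Hq; apply: memvZ.
  apply: NNPP => Hq2; apply: Hn; exists q.2; split; [exact: Hl | exact/negP].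
have Hf' : free (g :: B0) by rewrite free_cons Hgn.
have Hm' : (\dim {:A} - size (g :: B0) <= m)%N.
  move: Hm; rewrite /= subnS -(ltnS _ m).
  have : (size (g :: B0) <= \dim {:A})%N.
    by move: (Hf') => /eqP <-; apply: dimvS; apply: subvf.
  by rewrite /= => Hs; rewrite -ltnS prednK // subn_gt0.
have HG' : forall b, b \in g :: B0 -> Good b.
  by move=> b; rewrite inE => /orP[/eqP ->|/HG].
have [B [H1 H2 H3 H4]] := IH (g :: B0) Hm' Hf' HG'.
by exists B; split => // b Hb; apply: H4; rewrite inE Hb orbT.
Qed.

End Extend.

Section IfDir.
Variables (k : fieldType) (A : falgType k) (n : nat) (e : 'I_n -> A).
Hypothesis He : complete_prim_orth e.
Variables (Arr : finType) (src tgt : Arr -> 'I_n).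

Local Notation pok := (path_ok src tgt).
Local Notation pend := (path_end src tgt).

Lemma if_dir (nu : Arr -> A) (x0 : 'I_n) (gamma : 'I_n -> walk n Arr)
   (D : (A -> A) -> Prop) :
  is_presentation e src tgt nu ->
  (forall d, D d -> in_im_theta e src tgt nu x0 gamma d) -> diagonalizable_HH1 e D.
Proof.
move=> [Hnu Hsurj [N [HN2 HN]] Hker] HD.
pose Good (b : A) := exists p, pok p /\ b = nu_path e nu p.
have Hsp : forall v, exists l : seq (k * A), (forall q, q \in l -> Good q.2) /\
           v = \sum_(q <- l) q.1 *: q.2.
  move=> v; have [s [c [/allP Hs ->]]] := Hsurj v.
  exists [seq (c p, nu_path e nu p) | p <- s]; split; last by rewrite big_map.
  by move=> q /mapP[p Hp ->]; exists p; split => //; apply: Hs.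
have HG0 : forall b, b \in [seq e i | i <- enum 'I_n] -> Good b.
  by move=> b /mapP[i _ ->]; exists (i, [::]).
have [B [HBf HBs HBG HB0]] := extend_basis Hsp (free_e He) HG0.
exists B; split.
  split.
  - by rewrite /basis_of HBs eqxx HBf.
  - move=> b /HBG [p [Hp ->]]; exists p.1, (pend p); exact: (NP_block He Hnu).
  - by move=> i; apply: HB0; apply: map_f; rewrite mem_enum.
  move=> b Hb Hne; have [[x s] [Hp Eb]] := HBG b Hb.
  case: s Hp Eb => [|a s] Hp Eb.
    by move: (Hne x); rewrite Eb eqxx.
  move=> y; have [s' [c [Hs' Ey]]] := Hsurj y.
  have Hz : Spred e src tgt nu 1 (y * b).
    have := Spred_mul He Hnu (nu_sum_Spred e nu c Hs') (Spred_NP e nu (m := 1) Hp _).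
    by rewrite Ey Eb; apply.
  set z := y * b in Hz.
  have Hzm : forall m, Spred e src tgt nu m.+1 (z ^+ m.+1).
    elim=> [|m IH]; first by rewrite expr1.
    by rewrite exprSr; have := Spred_mul He Hnu IH Hz; rewrite addn1.
  apply: (@nilp_unit _ _ z N.+1).
  apply: (Spred_nilp (N := N.+1)) (Hzm N) => p Hp1 Hp2.
  by apply: HN => //; apply: ltnW.
move=> d /HD [f [Hf [d' [Hd' Hform Heq]]]].
exists d'; split => // b /HBG [p [Hp ->]].
by eexists; apply: Hform.
Qed.

End IfDir.

Section VecGen.
Variables (k : fieldType) (A : falgType k).

Definition ext (X : seq A) (c : nat -> k) : A := \sum_(t < size X) c t *: X`_t.

Definition indep_mod (X : seq A) (W : {vspace A}) : Prop :=
  forall c : nat -> k, ext X c \in W -> forall t, (t < size X)%N -> c t = 0.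

Definition ofo (m : nat) (kk : 'I_m -> k) (t : nat) : k := odflt 0 (omap kk (insub t)).

Lemma ofoE m (kk : 'I_m -> k) (i : 'I_m) : ofo kk i = kk i.
Proof. by rewrite /ofo valK. Qed.

Lemma ext_ofo (X : seq A) (kk : 'I_(size X) -> k) :
  ext X (ofo kk) = \sum_(i < size X) kk i *: X`_i.
Proof. by apply: eq_bigr => i _; rewrite ofoE. Qed.

Lemma ext_mem (X : seq A) c : ext X c \in <<X>>%VS.
Proof. by apply: memv_suml => i _; apply: memvZ; apply: memv_span; apply: mem_nth. Qed.

Lemma indep_free X W : indep_mod X W -> free X.
Proof.
move=> H; apply/(@freeP _ _ _ (in_tuple X)) => kk Hk i.
have := H (ofo kk); rewrite ext_ofo /= Hk mem0v => /(_ erefl i (ltn_ord i)).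
by rewrite ofoE.
Qed.

Lemma indep_cap X W : indep_mod X W -> (<<X>> :&: W = 0)%VS.
Proof.
move=> H; apply/eqP; rewrite -subv0; apply/subvP => v /memv_capP [Hv HW].
have Ev := @coord_span _ _ _ (in_tuple X) v Hv.
have := H (ofo (fun i => coord (in_tuple X) i v)); rewrite ext_ofo -Ev => /(_ HW) Hc.
rewrite memv0 Ev; apply/eqP; apply: big1 => i _.
by have := Hc i (ltn_ord i); rewrite ofoE => ->; rewrite scale0r.
Qed.

Lemma dim_mod X W : indep_mod X W -> \dim (<<X>> + W) = (size X + \dim W)%N.
Proof.
move=> H; have := dimv_sum_cap <<X>> W; rewrite indep_cap // dimv0 addn0 => ->.
by move: (indep_free H) => /eqP ->.
Qed.

Lemma select (W : {vspace A}) (X : seq A) : exists Y,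
  [/\ {subset Y <= X}, indep_mod Y W & {subset X <= (<<Y>> + W)%VS}].
Proof.
suff [Y [H1 H2 H3]] : exists Y, [/\ {subset Y <= X}, free (Y ++ vbasis W) &
    {subset X <= (<<Y>> + W)%VS}].
  exists Y; split => // c Hc t Ht.
  move: H2; rewrite cat_free => /and3P[HfY _ /directv_addP Hd].
  have : ext Y c \in (<<Y>> :&: <<vbasis W>>)%VS.
    by rewrite memv_cap ext_mem (span_basis (vbasisP W)) Hc.
  rewrite Hd memv0 => /eqP H0.
  move: HfY => /(@freeP _ _ _ (in_tuple Y)) /(_ (fun i => c i)) Hf.
  by have := Hf H0 (Ordinal Ht).
elim: X => [|x X [Y [H1 H2 H3]]].
  by exists [::]; split => //=; exact: basis_free (vbasisP W).
case Hx: (x \in (<<Y>> + W)%VS).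
  exists Y; split.
  - by move=> y /H1 Hy; rewrite inE Hy orbT.
  - by [].
  - by move=> y; rewrite inE => /orP[/eqP ->|/H3].
exists (x :: Y); split.
- by move=> y; rewrite !inE => /orP[->|/H1 ->]; rewrite ?orbT.
- rewrite cat_cons free_cons H2 andbT span_cat (span_basis (vbasisP W)) Hx //.
have HS : (<<Y>> + W <= <<x :: Y>> + W)%VS.
  by apply: addvS => //; apply: sub_span => y Hy; rewrite inE Hy orbT.
move=> y; rewrite inE => /orP[/eqP ->|/H3 Hy]; last exact: (subvP HS).
by rewrite span_cons -addvA; apply: (subvP (addvSl _ _)); exact: memv_line.
Qed.

End VecGen.

Section Nilp.
Variables (k : fieldType) (A : falgType k).

Lemma prod_decomp (R M : {vspace A}) v : v \in (R * M)%VS ->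
  exists a : 'I_(\dim M) -> A, (forall t, a t \in R) /\ v = \sum_t a t * (vbasis M)`_t.
Proof.
rewrite [@prodv _ _]unlock => Hv.
apply: (span_ind (P := fun v => exists a : 'I_(\dim M) -> A, (forall t, a t \in R) /\ v = \sum_t a t * (vbasis M)`_t) _ _ _ Hv).
- by exists (fun _ => 0); split => [t|]; rewrite ?mem0v // big1 // => t _; rewrite mul0r.
- move=> c u w [a [Ha ->]] [b [Hb ->]].
  exists (fun t => c *: a t + b t); split.
    by move=> t; rewrite memvD ?memvZ.
  rewrite scaler_sumr -big_split /=; apply: eq_bigr => t _.
  by rewrite mulrDl scalerAl.
move=> x /allpairsP [[u w] [/= Hu Hw ->]].
exists (fun t => coord (vbasis M) t w *: u); split.
  by move=> t; rewrite memvZ // vbasis_mem.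
rewrite {1}(coord_vbasis (vbasis_mem Hw)) mulr_sumr; apply: eq_bigr => t _.
by rewrite -scalerAr scalerAl.
Qed.

Lemma rad_nilp (R : {vspace A}) : (R * R <= R)%VS -> (forall v, v \in R -> in_rad v) ->
  exists m, (R ^+ m.+1 = 0)%VS.
Proof.
move=> HRR HR.
pose P j := (R ^+ j.+1)%VS.
have HP : forall j, (P j.+1 <= P j)%VS.
  elim=> [|j IH]; first by rewrite /P expvSl.
  by rewrite /P expvSl [X in (_ <= X)%VS]expvSl; apply: prodvSr.
have HPR : forall j, (P j <= R)%VS.
  elim=> [|j IH]; first by rewrite /P expv1.
  exact: subv_trans (HP j) IH.
have [j Hj] : exists j, P j.+1 = P j.
  case: (boolP [exists j : 'I_(\dim {:A}).+1, P j.+1 == P j]) => [/existsP [j /eqP Hj]|].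
    by exists j.
  move/existsPn => Hn.
  have Hd : forall j, (j <= \dim {:A})%N -> (\dim (P j) + j <= \dim {:A})%N.
    elim=> [|j IH] Hj; first by rewrite addn0 dimvS ?subvf.
    have Hlt : (\dim (P j.+1) < \dim (P j))%N.
      rewrite (ltn_leqif (dimv_leqif_eq (HP j))).
      have Hj' : (j < (\dim {:A}).+1)%N by apply: ltnW.
      exact: (Hn (Ordinal Hj')).
    rewrite addnS; apply: (leq_trans _ (IH (ltnW Hj))); by rewrite ltn_add2r.
  have := Hd _ (leqnn (\dim {:A})); rewrite -[X in (_ <= X)%N](add0n (\dim {:A})) leq_add2r leqn0.
  rewrite dimv_eq0 => /eqP H0.
  have := Hn (Ordinal (ltnSn (\dim {:A}))); rewrite /= H0.
  by have := HP (\dim {:A}); rewrite H0 subv0 => ->.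
exists j; set M := P j.
have HM : forall t, exists a : 'I_(\dim M) -> A, (forall s, a s \in R) /\
    (vbasis M)`_t = \sum_s a s * (vbasis M)`_s.
  move=> t; apply: prod_decomp.
  have : ((vbasis M)`_t \in P j.+1).
    by rewrite Hj; case: (ltnP t (size (vbasis M))) => Ht;
      [apply: vbasis_mem; apply: mem_nth | rewrite nth_default ?mem0v].
  by rewrite /P expvSl.
pose a := fun t : 'I_(\dim M) => proj1_sig (constructive_indefinite_description _ (HM t)).
have Ha : forall t, (forall s, a t s \in R) /\ (vbasis M)`_t = \sum_s a t s * (vbasis M)`_s.
  by move=> t; rewrite /a; case: constructive_indefinite_description.
have H0 := @nakayama _ _ (\dim M) (fun t => (vbasis M)`_t) a
   (fun t s => HR _ (proj1 (Ha t) s)) (fun t => proj2 (Ha t)).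
suff : (M <= 0)%VS by rewrite subv0 => /eqP.
rewrite -[X in (X <= _)%VS](span_basis (vbasisP M)); apply/span_subvP => x Hx.
have [t Ht ->] : exists2 t : 'I_(\dim M), true & x = (vbasis M)`_t.
  have := Hx; move/(nthP 0) => [t Ht <-].
  by rewrite size_tuple in Ht; exists (Ordinal Ht).
by rewrite H0 mem0v.
Qed.

End Nilp.

Section RSec.
Variables (k : fieldType) (A : falgType k) (n : nat) (e : 'I_n -> A).
Hypothesis He : complete_prim_orth e.
Variable B : seq A.
Hypothesis HB : adapted_basis e B.

Definition Br := [seq b <- B | [forall i, b != e i]].
Definition Rs := <<Br>>%VS.
Definition Bij i j := [seq b <- Br | e j * b * e i == b].

Lemma Br_B b : b \in Br -> b \in B.
Proof. by rewrite mem_filter => /andP[]. Qed.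

Lemma Br_rad b : b \in Br -> in_rad b.
Proof.
rewrite mem_filter => /andP[/forallP H Hb]; case: HB => _ _ _; by apply => //.
Qed.

Lemma Br_block b : b \in Br -> exists i j, b = e j * b * e i.
Proof. by move=> /Br_B; case: HB => _ H _ _; apply: H. Qed.

Lemma R_rad v : v \in Rs -> in_rad v.
Proof.
apply: span_ind; first exact: rad0.
  by move=> c u w Hu Hw; apply: radD => //; apply: radZ.
exact: Br_rad.
Qed.

Lemma scal_e_rad (c : k) i : in_rad (c *: e i) -> c = 0.
Proof.
move=> H; case: (c =P 0) => // /eqP Hc; exfalso; apply: (e_notrad He (i := i)).
by have := radZ c^-1 H; rewrite scalerA mulVf // scale1r.
Qed.

Lemma rad_R v : in_rad v -> v \in Rs.
Proof.
move=> Hv.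
have HBs : <<B>>%VS = fullv by case: HB => /andP[/eqP -> _].
pose Be := [seq b <- B | predC (fun b => [forall i, b != e i]) b].
have : v \in (Rs + <<Be>>)%VS.
  have Hp : perm_eq (Br ++ Be) B by apply/permPl; exact: perm_filterC.
  rewrite /Rs -span_cat (eq_span (perm_mem Hp)) HBs; exact: memvf.
move=> /memv_addP [u Hu [w Hw Evw]].
have Hwr : in_rad w.
  have -> : w = v - u by rewrite Evw addrC addKr.
  by apply: radB => //; apply: R_rad.
suff Hw0 : w = 0 by rewrite Evw Hw0 addr0.
have HQ : forall i j, exists c : k, e j * w * e i = c *: (e j * e i).
  move=> i j; move: w Hw {Evw Hwr}; apply: span_ind.
  - by exists 0; rewrite mulr0 mul0r scale0r.
  - move=> c u' w' [c1 H1] [c2 H2]; exists (c * c1 + c2).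
    by rewrite mulrDr mulrDl -scalerAr -scalerAl H1 H2 scalerA scalerDl.
  move=> b; rewrite mem_filter /= => /andP[/forallPn [l] /negPn /eqP -> _].
  case: (j =P l) => [<-|Hjl].
    by exists 1; rewrite scale1r (eMe He) eqxx.
  by exists 0; rewrite (eMe He) (introF eqP Hjl) mul0r scale0r.
rewrite (decomp He w); apply: big1 => i _; apply: big1 => j _.
have [c Hc] := HQ i j.
have Hr : in_rad (e j * w * e i) by apply: radMr; apply: radMl.
rewrite Hc (eMe He) in Hr *.
case: (j =P i) => [Eji|_]; last by rewrite scaler0.
by rewrite Eji eqxx in Hr *; rewrite (scal_e_rad Hr) scale0r.
Qed.

Lemma RR_R : (Rs * Rs <= Rs)%VS.
Proof.
apply/prodvP => u v Hu Hv; apply: rad_R; apply: radMr; exact: R_rad.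
Qed.

Lemma rad2_R2 v : in_rad2 v <-> v \in (Rs * Rs)%VS.
Proof.
split.
  move=> [s [Hs ->]]; rewrite big_seq; apply: memv_suml => p /Hs [H1 H2].
  by apply: memv_mul; apply: rad_R.
rewrite [@prodv _ _]unlock => Hv; apply: (span_ind (P := @in_rad2 _ _) _ _ _ Hv); first exact: rad2_0.
  by move=> c a b Ha Hb; apply: rad2D => //; apply: rad2Z.
move=> x /allpairsP [[a b] [/= Ha Hb ->]].
by apply: rad2M; apply: R_rad; apply: vbasis_mem.
Qed.

Lemma Bij_block b i j : b \in Bij i j -> b = e j * b * e i /\ b \in Br.
Proof. by rewrite mem_filter => /andP[/eqP -> H]; split => //; rewrite -(eqP _). Qed.

Lemma R_block v i j : v \in Rs -> e j * v * e i \in <<Bij i j>>%VS.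
Proof.
move=> Hv; apply: (span_ind (P := fun v => e j * v * e i \in <<Bij i j>>%VS) _ _ _ Hv).
- by rewrite mulr0 mul0r mem0v.
- move=> c u w Hu Hw; rewrite mulrDr mulrDl -scalerAr -scalerAl.
  by apply: memvD => //; apply: memvZ.
move=> b Hb; case Hbl: (e j * b * e i == b).
  by rewrite (eqP Hbl); apply: memv_span; rewrite mem_filter Hbl.
have [p [q Hpq]] := Br_block Hb.
have E : e j * b * e i = if (j == q) && (p == i) then b else 0.
  have -> : e j * b * e i = (e j * e q) * b * (e p * e i) by rewrite {1}Hpq !mulrA.
  rewrite !(eMe He); case: (j =P q) => [Ejq|_]; last by rewrite !mul0r.
  case: (p =P i) => [Epi|_] /=; last by rewrite mulr0.
  by subst; rewrite -Hpq.
by move: Hbl; rewrite E; case: ifP => _; rewrite ?eqxx // mem0v.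
Qed.

End RSec.

Section Construct.
Variables (k : fieldType) (A : falgType k) (n : nat) (e : 'I_n -> A).
Hypothesis He : complete_prim_orth e.
Variables (Arr : finType) (src tgt : Arr -> 'I_n).
Hypothesis Hq : is_ordinary_quiver e src tgt.
Variable B : seq A.
Hypothesis HB : adapted_basis e B.

Local Notation R := (Rs e B).
Local Notation W := (Rs e B * Rs e B)%VS.
Local Notation pok := (path_ok src tgt).
Local Notation pend := (path_end src tgt).

Definition Aset i j := [set a | (src a == i) && (tgt a == j)].

Lemma Ysel_ex i j : exists Y, [/\ {subset Y <= Bij e B i j}, indep_mod Y W,
   {subset Bij e B i j <= (<<Y>> + W)%VS} & size Y = #|Aset i j|].
Proof.
have [Y [H1 H2 H3]] := select W (Bij e B i j).
exists Y; split => //.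
have [X [HX1 HX2 HX3 HX4]] := Hq i j.
rewrite -HX1.
have HXi : indep_mod X W.
  by move=> c /(rad2_R2 He HB) Hc; apply: HX4.
have E : (<<X>> + W = <<Y>> + W)%VS.
  apply/eqP; rewrite eqEsubv !subv_add !addvSr !andbT; apply/andP; split.
    apply/span_subvP => x Hx; have [Hr Hb] := HX2 x Hx.
    have := R_block He HB i j (rad_R He HB Hr); rewrite -Hb => Hx'.
    have HS : (<<Bij e B i j>> <= <<Y>> + W)%VS by apply/span_subvP.
    exact: (subvP HS).
  apply/span_subvP => y /H1 Hy; have [Hb Hbr] := Bij_block Hy.
  have [c Hc] := HX3 y (Br_rad HB Hbr) Hb.
  have -> : y = ext X c + (y - ext X c) by rewrite addrC subrK.
  apply: memv_add; first exact: ext_mem.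
  by apply/(rad2_R2 He HB).
have := dim_mod HXi; rewrite E dim_mod // => /eqP; rewrite eqn_add2r => /eqP.
by [].
Qed.

Definition Ysel i j : seq A := proj1_sig (constructive_indefinite_description _ (Ysel_ex i j)).

Lemma YselP i j : [/\ {subset Ysel i j <= Bij e B i j}, indep_mod (Ysel i j) W,
   {subset Bij e B i j <= (<<Ysel i j>> + W)%VS} & size (Ysel i j) = #|Aset i j|].
Proof. by rewrite /Ysel; case: constructive_indefinite_description. Qed.

Definition nuY (a : Arr) : A :=
  (Ysel (src a) (tgt a))`_(index a (enum (Aset (src a) (tgt a)))).

Lemma nuY_in a : nuY a \in Ysel (src a) (tgt a).
Proof.
apply: mem_nth; have [_ _ _ ->] := YselP (src a) (tgt a).
by rewrite cardE index_mem mem_enum inE !eqxx.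
Qed.

Lemma nuY_Bij a : nuY a \in Bij e B (src a) (tgt a).
Proof. by have [H _ _ _] := YselP (src a) (tgt a); apply: H; apply: nuY_in. Qed.

Lemma Hnu a : nuY a = e (tgt a) * nuY a * e (src a).
Proof. by have [] := Bij_block (nuY_Bij a). Qed.

Lemma nuY_Br a : nuY a \in Br e B.
Proof. by have [] := Bij_block (nuY_Bij a). Qed.

Lemma nuY_B a : nuY a \in B.
Proof. exact: Br_B (nuY_Br a). Qed.

Lemma nuY_R a : nuY a \in R.
Proof. by apply: memv_span; apply: nuY_Br. Qed.

Lemma Ysel_nu i j y : y \in Ysel i j -> exists a, [/\ src a = i, tgt a = j & nuY a = y].
Proof.
move=> /(nthP 0) [t Ht <-].
have [_ _ _ Hs] := YselP i j; rewrite Hs cardE in Ht.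
case E: (enum (Aset i j)) Ht => [//|a0 s] Ht.
pose a := nth a0 (enum (Aset i j)) t.
have Ha : a \in Aset i j by rewrite -mem_enum /a mem_nth // E.
move: (Ha); rewrite inE => /andP[/eqP Hs' /eqP Ht'].
exists a; split => //.
rewrite /nuY Hs' Ht' /a index_uniq ?enum_uniq // E //.
Qed.

End Construct.

Section Pres.
Variables (k : fieldType) (A : falgType k) (n : nat) (e : 'I_n -> A).
Hypothesis He : complete_prim_orth e.
Variables (Arr : finType) (src tgt : Arr -> 'I_n).
Hypothesis Hq : is_ordinary_quiver e src tgt.
Variable B : seq A.
Hypothesis HB : adapted_basis e B.

Local Notation R := (Rs e B).
Local Notation W := (Rs e B * Rs e B)%VS.
Local Notation pok := (path_ok src tgt).
Local Notation pend := (path_end src tgt).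
Local Notation nu := (nuY He Hq HB).
Local Notation NP := (nu_path e nu).
Local Notation Sp := (Spred e src tgt nu).

Lemma Hnu' a : nu a = e (tgt a) * nu a * e (src a).
Proof. exact: Hnu. Qed.

Lemma R_Ml x u : u \in R -> x * u \in R.
Proof. by move=> Hu; apply: (rad_R He HB); apply: radMl; apply: (R_rad HB). Qed.

Lemma R_Mr x u : u \in R -> u * x \in R.
Proof. by move=> Hu; apply: (rad_R He HB); apply: radMr; apply: (R_rad HB). Qed.

Lemma Rpow_sub m : (R ^+ m.+1 <= R)%VS.
Proof.
elim: m => [|m IH]; first by rewrite expv1.
rewrite expvSl; apply: subv_trans (RR_R He HB); exact: prodvSr.
Qed.

Lemma pok_arrow a : pok (src a, [:: a]).
Proof. by rewrite /path_ok /walk_ok /= /letter_src /= eqxx. Qed.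

Lemma NP_arrow a : NP (src a, [:: a]) = nu a.
Proof. by rewrite /nu_path /= {1}Hnu' -mulrA (eMe He) eqxx -Hnu'. Qed.

Lemma NP_pow x s a : pok (x, rcons s a) -> NP (x, rcons s a) \in (R ^+ (size s).+1)%VS.
Proof.
elim/last_ind: s a => [|s b IH] a.
  by move=> _; rewrite NP_rcons expv1; apply: R_Mr; apply: nuY_R.
rewrite (pok_rcons) => /andP [Hok _].
rewrite NP_rcons size_rcons expvSl; apply: memv_mul; first exact: nuY_R.
exact: IH.
Qed.

Lemma NP_R p : pok p -> p.2 != [::] -> NP p \in R.
Proof.
case: p => x s; case/lastP: s => [//|s a] Hp _.
exact: (subvP (Rpow_sub _)) (NP_pow Hp).
Qed.

Lemma NP_W p : pok p -> (2 <= size p.2)%N -> NP p \in W.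
Proof.
case: p => x s; case/lastP: s => [//|s a] Hp; rewrite size_rcons ltnS => Hs.
have := NP_pow Hp; rewrite expvSl; apply: (subvP (prodvSr _ _)).
case: (size s) Hs => [//|m] _; exact: Rpow_sub.
Qed.

Lemma nilpR : exists m, (R ^+ m.+1 = 0)%VS.
Proof. apply: rad_nilp; [exact: RR_R | exact: R_rad]. Qed.

Definition Tm (m : nat) (v : A) := exists s, Sp 0 s /\ v - s \in (R ^+ m)%VS.

Lemma Tm_C m (c : k) u v : Tm m u -> Tm m v -> Tm m (c *: u + v).
Proof.
move=> [s1 [H1 H1']] [s2 [H2 H2']]; exists (c *: s1 + s2); split.
  exact: SpredC.
have -> : c *: u + v - (c *: s1 + s2) = c *: (u - s1) + (v - s2).
  by rewrite scalerBr opprD addrACA.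
by apply: memvD => //; apply: memvZ.
Qed.

Lemma Tm_sum m (I : Type) (r : seq I) (P : pred I) (F : I -> A) :
  (forall i, P i -> Tm m (F i)) -> Tm m (\sum_(i <- r | P i) F i).
Proof.
move=> H; apply: big_ind => //.
  by exists 0; split; [exact: Spred0 | rewrite subr0 mem0v].
by move=> x y Hx Hy; rewrite -(scale1r x); apply: Tm_C.
Qed.

Lemma Ysel_Sp i j y : y \in <<Ysel He Hq HB i j>>%VS -> Sp 0 y.
Proof.
move=> Hy; apply: (span_ind (P := Sp 0) _ _ _ Hy).
- exact: Spred0.
- by move=> c u v Hu Hv; apply: SpredC.
move=> x /Ysel_nu [a [Ha1 Ha2 <-]].
by rewrite -NP_arrow; apply: Spred_NP => //; exact: pok_arrow.
Qed.

Lemma R_T2 v : v \in R -> Tm 2 v.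
Proof.
move=> Hv; rewrite (decomp He v); apply: Tm_sum => i _; apply: Tm_sum => j _.
have [_ _ H3 _] := YselP He Hq HB i j.
have HS : (<<Bij e B i j>> <= <<Ysel He Hq HB i j>> + W)%VS by apply/span_subvP.
have := subvP HS _ (R_block He HB i j Hv) => /memv_addP [y Hy [w Hw ->]].
exists y; split; first exact: Ysel_Sp Hy.
by rewrite addrC addKr.
Qed.

Lemma R_Tm m v : v \in R -> Tm m.+1 v.
Proof.
elim: m v => [|m IH] v Hv.
  by exists 0; split; [exact: Spred0 | rewrite subr0 expv1].
have [s [Hs Hw]] := R_T2 Hv.
have HW : forall w, w \in W -> Tm m.+2 w.
  rewrite [@prodv _ _]unlock => w Hw'.
  apply: (span_ind (P := Tm m.+2) _ _ _ Hw').
  - by exists 0; split; [exact: Spred0 | rewrite subr0 mem0v].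
  - by move=> c u w' Hu Hw''; apply: Tm_C.
  move=> z /allpairsP [[x y] [/= Hx Hy ->]].
  have HxR := vbasis_mem Hx; have HyR := vbasis_mem Hy.
  have [s1 [Hs1 Hs1']] := IH x HxR; have [s2 [Hs2 Hs2']] := IH y HyR.
  exists (s1 * s2); split; first exact: (Spred_mul He (@Hnu' ) Hs1 Hs2).
  have -> : x * y - s1 * s2 = (x - s1) * y + s1 * (y - s2).
    by rewrite mulrBl mulrBr addrA subrK.
  have Hs1R : s1 \in R.
    have -> : s1 = x - (x - s1) by rewrite opprB addrC subrK.
    by apply: memvB => //; apply: (subvP (Rpow_sub m)).
  apply: memvD.
    by rewrite expvSr; apply: memv_mul.
  by rewrite expvSl; apply: memv_mul.
have [s' [Hs' Hs'']] := HW _ Hw.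
exists (s + s'); split; first exact: SpredD.
by rewrite opprD addrA.
Qed.

Lemma R_Sp v : v \in R -> Sp 0 v.
Proof.
move=> Hv; have [m Hm] := nilpR.
have [s [Hs]] := R_Tm m Hv; rewrite Hm memv0 subr_eq0 => /eqP ->.
exact: Hs.
Qed.

Lemma all_Sp v : Sp 0 v.
Proof.
have HBs : <<B>>%VS = fullv by case: HB => /andP[/eqP -> _].
have Hv : v \in <<B>>%VS by rewrite HBs memvf.
apply: (span_ind (P := Sp 0) _ _ _ Hv).
- exact: Spred0.
- by move=> c u w Hu Hw; apply: SpredC.
move=> b Hb; case Hf: [forall i, b != e i].
  by apply: R_Sp; apply: memv_span; rewrite mem_filter Hf.
move/negbT/forallPn: Hf => [l /negPn /eqP ->].
by rewrite -(NP_nil e nu l); apply: Spred_NP.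
Qed.

Lemma nuY_surj : forall a : A, exists s c, all pok s /\ a = nu_sum e nu s c.
Proof.
move=> a; have [s [c [_ H1 H2]]] := Spred_nu_sum (all_Sp a).
by exists s, c.
Qed.

Lemma nuY_nilp : exists N, (2 <= N)%N /\ forall p, pok p -> (N <= size p.2)%N -> NP p = 0.
Proof.
have [m Hm] := nilpR.
exists (maxn 2 m.+1); split; first by rewrite leq_maxl.
case=> x s; case/lastP: s => [|s a] Hp HN.
  by move: HN; rewrite /= geq_max.
apply/eqP; rewrite -memv0.
have := NP_pow Hp.
have -> : (size s).+1 = (m.+1 + ((size s).+1 - m.+1))%N.
  by rewrite subnKC //; move: HN; rewrite size_rcons geq_max => /andP[].
by rewrite expvD Hm prod0v.
Qed.

End Pres.

Section Ker.
Variables (k : fieldType) (A : falgType k) (n : nat) (e : 'I_n -> A).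
Hypothesis He : complete_prim_orth e.
Variables (Arr : finType) (src tgt : Arr -> 'I_n).
Hypothesis Hq : is_ordinary_quiver e src tgt.
Variable B : seq A.
Hypothesis HB : adapted_basis e B.

Local Notation R := (Rs e B).
Local Notation W := (Rs e B * Rs e B)%VS.
Local Notation pok := (path_ok src tgt).
Local Notation pend := (path_end src tgt).
Local Notation nu := (nuY He Hq HB).
Local Notation NP := (nu_path e nu).

Lemma blk_sum s c i j : all pok s ->
  e j * nu_sum e nu s c * e i = \sum_(q <- s | (q.1 == i) && (pend q == j)) c q *: NP q.
Proof.
move=> /allP Hs; rewrite /nu_sum mulr_sumr mulr_suml [RHS]big_mkcond /=.
apply: eq_big_seq => q Hq'.
rewrite -scalerAr -scalerAl (e_NP He (Hnu' He Hq HB) _ (Hs q Hq')).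
case: (pend q == j); last by rewrite mul0r scaler0 andbF.
by rewrite (NP_e He) andbT; case: (q.1 == i); rewrite ?scaler0.
Qed.

Lemma ker0 s c p : uniq s -> all pok s -> nu_sum e nu s c = 0 -> p \in s -> p.2 = [::] ->
  c p = 0.
Proof.
case: p => x t /= Hu Hs H0 Hp Ht; subst t.
have := blk_sum c x x Hs; rewrite H0 mulr0 mul0r => /esym E.
have Hpf : (x, [::]) \in [seq q <- s | (q.1 == x) && (pend q == x)].
  by rewrite mem_filter Hp /= eqxx.
rewrite -big_filter (bigD1_seq _ Hpf (filter_uniq _ Hu)) /= in E.
set r := \sum_(q <- _ | _) _ in E.
have Hr : r \in R.
  rewrite /r big_seq_cond; apply: memv_suml => q /andP[Hq1 Hq2].
  apply: memvZ; move: Hq1; rewrite mem_filter => /andP[/andP[/eqP Hqx _] Hqs].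
  apply: (NP_R He Hq HB); first by move/allP: Hs; apply.
  by case: q Hqx Hq2 {Hqs} => y [|b t] //= ->; rewrite eqxx.
have : c (x, [::]) *: e x = - r by apply/eqP; rewrite -addr_eq0 E.
move=> Ec; apply: (scal_e_rad He (i := x)); rewrite Ec; apply: radN.
exact: (R_rad HB).
Qed.

Lemma ker1 s c a : uniq s -> all pok s -> nu_sum e nu s c = 0 ->
  (src a, [:: a]) \in s -> c (src a, [:: a]) = 0.
Proof.
move=> Hu Hs H0 Hp.
have E := blk_sum c (src a) (tgt a) Hs; rewrite H0 mulr0 mul0r in E.
rewrite (bigID (fun q => size q.2 == 1)) /= in E.
set S1 := \sum_(q <- s | _ && (size q.2 == 1)) _ in E.
set S2 := \sum_(q <- s | _ && ~~ (size q.2 == 1)) _ in E.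
have HS2 : S2 \in W.
  rewrite /S2 big_seq_cond; apply: memv_suml => q /andP[Hq1 /andP[_ Hsz]].
  have Hqok : pok q by move/allP: Hs; apply.
  case: q Hq1 Hqok Hsz => y t; case: t => [|b t] Hq1 Hqok Hsz.
    by rewrite (ker0 Hu Hs H0 Hq1) // scale0r mem0v.
  move: Hq1 Hqok Hsz; case: t => [|b' t] Hq1 Hqok Hsz; first by [].
  by apply: memvZ; apply: (NP_W He Hq HB).
have HS1 : S1 \in W.
  have -> : S1 = - S2 by apply/eqP; rewrite -addr_eq0 -E.
  by rewrite memvN.
pose x := src a; pose j := tgt a.
pose en := enum (Aset src tgt x j).
have Hsz : size (Ysel He Hq HB x j) = size en.
  by have [_ _ _ ->] := YselP He Hq HB x j; rewrite cardE.
pose c' t := let b := nth a en t in if (x, [:: b]) \in s then c (x, [:: b]) else 0.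
have HS1e : S1 = ext (Ysel He Hq HB x j) c'.
  rewrite /S1 -big_filter.
  rewrite (perm_big [seq (x, [:: b]) | b <- [seq b <- en | (x, [:: b]) \in s]]); last first.
    apply: uniq_perm; first exact: filter_uniq.
      rewrite map_inj_uniq; first by apply: filter_uniq; exact: enum_uniq.
      by move=> b1 b2 [].
    move=> q; rewrite mem_filter; apply/idP/idP.
      move=> /andP[/andP[/andP[/eqP Hq1 /eqP Hq2] Hqs] Hqin].
      have Hqok : pok q by move/allP: Hs; apply.
      case: q Hq1 Hq2 Hqs Hqin Hqok => y [|b [|b' t]] //= Hq1 Hq2 _ Hqin Hqok.
      move: Hqok; rewrite /path_ok /walk_ok /= /letter_src /= andbT => /eqP Hb.
      apply/mapP; exists b; last by rewrite Hq1.
      rewrite mem_filter /en mem_enum inE /x -Hq1 Hqin Hb eqxx /=.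
      by apply/eqP; exact: Hq2.
    move=> /mapP[b]; rewrite mem_filter mem_enum inE => /andP[Hin /andP[/eqP Hsb /eqP Htb]] ->.
    by rewrite Hin eqxx /= andbT; apply/andP; split; [apply/eqP; exact: Htb|].
  rewrite big_map big_filter big_mkcond (big_nth a) big_mkord /ext Hsz.
  apply: eq_bigr => t _; rewrite /c' /=.
  set b := nth a en t.
  have Hb : b \in Aset src tgt x j by rewrite -mem_enum; apply: mem_nth.
  move: (Hb); rewrite inE => /andP[/eqP Hsb /eqP Htb].
  case: ifP => _; last by rewrite scale0r.
  congr (_ *: _); rewrite -Hsb (NP_arrow He Hq HB) /nuY Hsb Htb.
  by rewrite index_uniq ?enum_uniq.
have Hidx : (index a en < size (Ysel He Hq HB x j))%N.
  by rewrite Hsz index_mem mem_enum inE !eqxx.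
have [_ Hind _ _] := YselP He Hq HB x j.
have := Hind c' _ _ Hidx; rewrite -HS1e => /(_ HS1).
by rewrite /c' nth_index ?mem_enum ?inE ?eqxx // Hp.
Qed.

End Ker.

Section Eig.
Variables (k : fieldType) (A : falgType k).

Lemma lin_sum (L : A -> A) : (forall (c : k) a b, L (c *: a + b) = c *: L a + L b) ->
  L 0 = 0 /\ forall (I : Type) (r : seq I) (F : I -> A), L (\sum_(i <- r) F i) = \sum_(i <- r) L (F i).
Proof.
move=> HL.
have L0 : L 0 = 0.
  have := HL 1 0 0; rewrite !scale1r addr0.
  by move/(congr1 (fun x => x - L 0)); rewrite subrr addrK => /esym.
split; first exact: L0.
move=> I r F; elim: r => [|i r IH]; first by rewrite !big_nil.
rewrite !big_cons; have := HL 1 (F i) (\sum_(j <- r) F j); rewrite !scale1r => ->.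
by rewrite IH.
Qed.

Lemma eig_group (I : eqType) (L : A -> A) (w : I -> A) (g t : I -> k) :
  (forall (c : k) a b, L (c *: a + b) = c *: L a + L b) ->
  forall s : seq I, (forall p, p \in s -> L (w p) = g p *: w p) ->
  \sum_(p <- s) t p *: w p = 0 -> forall mu, \sum_(p <- s | g p == mu) t p *: w p = 0.
Proof.
move=> HL s; have [L0 Lsum] := lin_sum HL.
move: {2}(size s) (leqnn (size s)) => N; elim: N s t => [|N IH] s t Hs Hw H0 mu.
  by move: Hs; rewrite leqn0 => /nilP ->; rewrite big_nil.
case Hall: (all (fun p => g p == mu) s).
  transitivity (\sum_(p <- s) t p *: w p); last exact: H0.
  rewrite big_seq_cond [RHS]big_seq; apply: eq_bigl => p.
  by case Hp: (p \in s) => //=; move/allP: Hall => /(_ p Hp) ->.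
move/negbT/allPn: Hall => [q Hq Hqmu].
pose nu := g q.
pose s' := [seq p <- s | g p != nu].
pose t' := fun p => t p * (g p - nu).
have Hs' : (size s' <= N)%N.
  rewrite -ltnS; apply: leq_trans Hs; rewrite size_filter.
  rewrite -(count_predC (fun p => g p != nu) s) -addn1 leq_add2l.
  by rewrite -has_count; apply/hasP; exists q => //=; rewrite negbK.
have H0' : \sum_(p <- s') t' p *: w p = 0.
  rewrite big_filter big_mkcond /=.
  have -> : \sum_(p <- s) (if g p != nu then t' p *: w p else 0) =
            \sum_(p <- s) t p *: L (w p) - nu *: \sum_(p <- s) t p *: w p.
    rewrite scaler_sumr -sumrB big_seq [RHS]big_seq; apply: eq_bigr => p Hp.
    rewrite Hw // /t' scalerA scalerA -scalerBl [nu * _]mulrC -mulrBr.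
    by case: (g p =P nu) => [->|_] /=; rewrite ?subrr ?mulr0 ?scale0r.
  rewrite H0 scaler0 subr0.
  have <- : L (\sum_(p <- s) t p *: w p) = \sum_(p <- s) t p *: L (w p).
    rewrite Lsum; apply: eq_bigr => p _.
    by have := HL (t p) (w p) 0; rewrite !addr0 L0 addr0.
  by rewrite H0.
have Hw' : forall p, p \in s' -> L (w p) = g p *: w p.
  by move=> p; rewrite mem_filter => /andP[_ /Hw].
have := IH s' t' Hs' Hw' H0' mu.
have Hmu : mu != nu by rewrite eq_sym.
rewrite big_filter_cond.
have -> : \sum_(p <- s | (g p != nu) && (g p == mu)) t' p *: w p =
          (mu - nu) *: \sum_(p <- s | g p == mu) t p *: w p.
  rewrite scaler_sumr; apply: eq_big => p.
    by case: (g p =P mu) => [->|_]; rewrite ?Hmu ?eqxx ?andbF.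
  by rewrite /t' => /andP[_ /eqP ->]; rewrite scalerA mulrC.
move/eqP; rewrite scaler_eq0 subr_eq0 (negbTE Hmu) /= => /eqP.
by [].
Qed.

End Eig.

Section ZmodAC.
Variable V : zmodType.
Lemma zAC1 (x1 x2 y1 y2 z1 z2 : V) :
  x1 + x2 + (y1 + y2 - (z1 + z2)) = x1 + (y1 - z1) + (x2 + (y2 - z2)).
Proof. by rewrite opprD [y1 + y2 + _]addrACA [x1 + x2 + _]addrACA. Qed.
Lemma zAC2 (x1 x2 p q r : V) : x1 + x2 + (p - r) = (x1 + (p - q)) + (x2 + (q - r)).
Proof.
rewrite [RHS]addrACA; congr (_ + _).
by rewrite addrA subrK.
Qed.
Lemma zAC3 (p q r s : V) : (p - q) - (r - s) = (p - r) - (q - s).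
Proof.
rewrite !opprB !addrA [p - q + s]addrAC -[p + s - q - r]addrA [- q - r]addrC addrA.
by rewrite [p + s - r]addrAC.
Qed.
End ZmodAC.

Section Theta.
Variables (k : fieldType) (A : falgType k) (n : nat) (e : 'I_n -> A).
Hypothesis He : complete_prim_orth e.
Variables (Arr : finType) (src tgt : Arr -> 'I_n) (nu : Arr -> A).
Hypothesis Hnu : forall a, nu a = e (tgt a) * nu a * e (src a).

Local Notation NP := (nu_path e nu).
Local Notation pok := (path_ok src tgt).
Local Notation pend := (path_end src tgt).

Lemma Ec_NP c u : pok u -> Ec e c * NP u = c (pend u) *: NP u.
Proof.
move=> Hu; rewrite {1}(NP_block He Hnu Hu) !mulrA (Ec_e He) -!scalerAl.
by rewrite -(NP_block He Hnu Hu).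
Qed.

Lemma NP_Ec c u : pok u -> NP u * Ec e c = c u.1 *: NP u.
Proof.
move=> Hu; rewrite {1}(NP_block He Hnu Hu) -!mulrA (e_Ec He) -!scalerAr !mulrA.
by rewrite -(NP_block He Hnu Hu).
Qed.

Lemma theta_ok (d d' : A -> A) (lam : Arr -> k) (x0 : 'I_n) (gamma : 'I_n -> walk n Arr) :
  der0 e d' -> (forall a, d' (nu a) = lam a *: nu a) -> hh1_eq e d d' ->
  in_im_theta e src tgt nu x0 gamma d.
Proof.
move=> Hd' Hlam Hh.
pose f (w : walk n Arr) := \sum_(l <- w.2) (if l.2 then lam l.1 else - lam l.1).
pose fp (p : qpath n Arr) := \sum_(a <- p.2) lam a.
have Hfp : forall p, f (path_walk p) = fp p by move=> p; rewrite /f /path_walk /= big_map.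
have Hcat : forall w1 w2, f (wcat w1 w2) = f w1 + f w2 by move=> w1 w2; rewrite /f /= big_cat.
have Hinv : forall w, f (winv src tgt w) = - f w.
  move=> w; rewrite /f /winv /= big_rev big_map -sumrN; apply: eq_bigr => l _.
  by case: l.2; rewrite ?opprK.
have HdNP := der0_NP Hd' Hlam.
have Hmin : forall s t u v, minimal_relation e src tgt nu s t -> u \in s -> v \in s -> fp u = fp v.
  move=> s t u v [/andP[Hus Hok] Hne Ht H0 Hm] Hu Hv.
  apply: NNPP => Hneq.
  have Hg := @eig_group _ _ _ d' NP fp t (der0_lin Hd') s (fun p _ => HdNP p) H0 (fp u).
  have Hm' := Hm [seq fp p == fp u | p <- s]; rewrite -filter_mask in Hm'.
  have Hne' : [seq p <- s | fp p == fp u] != [::].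
    apply/eqP => Hn; have : u \in [seq p <- s | fp p == fp u] by rewrite mem_filter eqxx Hu.
    by rewrite Hn.
  have Hlt : (size [seq p <- s | fp p == fp u] < size s)%N.
    rewrite size_filter -(count_predC (fun p => fp p == fp u) s) -[X in (X < _)%N]addn0.
    rewrite ltn_add2l -has_count; apply/hasP; exists v => //=.
    by apply/eqP => Hvu; apply: Hneq; rewrite Hvu.
  by have := Hm' Hne' Hlt; rewrite /nu_sum big_filter Hg eqxx.
have Hrel : forall w w', walk_rel e src tgt nu w w' -> f w = f w'.
  move=> w w'; elim => {w w'}.
  - by [].
  - by move=> w w' _ ->.
  - by move=> w1 w2 w3 _ -> _ ->.
  - move=> a b; rewrite /f /wtriv /= big_cons big_seq1 big_nil /=.
    by case: b => /=; rewrite ?subrr ?addNr.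
  - move=> x pre w w' post _ IH _ _ _ _; rewrite /f /= !big_cat /=.
    by rewrite /f in IH; rewrite IH.
  - move=> s t u v Hst Hu Hv; rewrite !Hfp; exact: Hmin Hst Hu Hv.
pose cE i := - f (gamma i).
pose E := Ec e cE.
pose d'' a := d' a + (E * a - a * E).
exists f; split.
  by split => [w w' _ _ /Hrel //|w1 w2 _ _]; exact: Hcat.
exists d''; split.
- split.
  + move=> c a b; rewrite /d'' (der0_lin Hd') mulrDr mulrDl -scalerAr -scalerAl.
    by rewrite scalerDr scalerBr zAC1.
  + move=> a b; rewrite /d'' (der0_M Hd') mulrDl mulrDr mulrBl mulrBr !mulrA.
    exact: zAC2.
  + move=> i; rewrite /d''; case: Hd' => _ _ ->.
    by rewrite /E (Ec_e He) (e_Ec He) subrr add0r.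
- move=> u Hu; rewrite /d'' HdNP /E (Ec_NP _ Hu) (NP_Ec _ Hu) -scalerBl -scalerDl.
  congr (_ *: _); rewrite !Hcat Hinv Hfp /cE.
  rewrite opprK [f (gamma u.1) + _]addrC -addrA.
  by rewrite [- f (gamma (pend u)) + _]addrC.
move: Hh => [c0 Hc0]; exists (fun i => c0 i - cE i); cbv zeta; move=> a.
change (d a - d'' a = Ec e (fun i => c0 i - cE i) * a - a * Ec e (fun i => c0 i - cE i)).
rewrite -EcB mulrBl mulrBr /d'' opprD addrA.
have := Hc0 a; rewrite /= => ->.
exact: zAC3.
Qed.

End Theta.

Unset Implicit Arguments.

Theorem proposition2p6 (k : closedFieldType) (A : falgType k) (n : nat)
    (e : 'I_n -> A) (Arr : finType) (src tgt : Arr -> 'I_n) :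
  complete_prim_orth e -> basic_alg e -> connected_alg A ->
  is_ordinary_quiver e src tgt -> acyclic_quiver src tgt ->
  forall (x0 : 'I_n) (T : {set Arr}) (gamma : 'I_n -> walk n Arr),
    is_max_tree src tgt T -> gamma_spec src tgt T x0 gamma ->
  forall D : (A -> A) -> Prop, (forall d, D d -> der0 e d) ->
    diagonalizable_HH1 e D <->
    exists nu : Arr -> A, is_presentation e src tgt nu /\
      forall d, D d -> in_im_theta e src tgt nu x0 gamma d.
Proof.
move=> He _ _ Hq _ x0 T gamma _ _ D _; split.
- move=> [B [HB HDB]].
  exists (nuY He Hq HB); split.
  + split.
    * exact: (Hnu' He Hq HB).
    * exact: nuY_surj.
    * exact: nuY_nilp.
    move=> s c Hu Hs H0 [x t] Hp Ht.
    case: t Hp Ht => [|a [|a' t]] Hp Ht //.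
      exact: (ker0 Hu Hs H0 Hp).
    have Hok : path_ok src tgt (x, [:: a]) by move/allP: Hs; apply.
    move: Hok; rewrite /path_ok /walk_ok /= /letter_src /= andbT => /eqP Hsa.
    rewrite -Hsa in Hp *; exact: (ker1 Hu Hs H0 Hp).
  + move=> d /HDB [d' [Hd' Hdiag Heq]].
    have Hl : forall a, exists c, d' (nuY He Hq HB a) = c *: nuY He Hq HB a.
      by move=> a; apply: Hdiag; apply: nuY_B.
    pose lam a := proj1_sig (constructive_indefinite_description _ (Hl a)).
    apply: (theta_ok He (Hnu' He Hq HB) (lam := lam) x0 gamma Hd' _ Heq) => a.
    by rewrite /lam; case: constructive_indefinite_description.
- by move=> [nu [Hp HD']]; exact: (if_dir He Hp HD').
Qed.
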